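(* Let $b \ge 1$ be an integer and let $L_{1,b} = \{C_{1,1}, C_{2,1}\} \cup \{C_{1,j} : 1 < j \le b+1\}$, of size $n = b+2$. Then on the $n \times n$ board, $2 \le \mathrm{cp}_{\mathrm{free}}(L_{1,b}) \le 4$.
   Context: For integers $i,j$, $C_{i,j}$ denotes the unit square cell in column $i$ and row $j$ of the integer grid (columns numbered left to right, rows numbered top to bottom). A polyomino is a finite set of cells; its size is its number of cells. For a polyomino $\mathcal{P}$ of size $n$ the board is $\mathbb{B} = \{C_{i,j} : 1 \le i,j \le n\}$. The shift of $\mathcal{P}$ by integers $(c,d)$ is $\mathcal{P}+(c,d) = \{C_{x+c,y+d} : C_{x,y} \in \mathcal{P}\}$. For $0<a\le b$ and $L_{a,b} = \{C_{i,1} : 1 \le i \le a+1\} \cup \{C_{1,j} : 1 < j \le b+1\}$, the rotations by $90^\circ, 180^\circ, 270^\circ$ clockwise are $LR_{a,b} = \{C_{i,1} : 1 \le i \le b+1\} \cup \{C_{b+1,j} : 1 \le j \le a+1\}$, $LR^2_{a,b} = \{C_{i,b+1} : 1 \le i \le a+1\} \cup \{C_{a+1,j} : 1 \le j \le b+1\}$, $LR^3_{a,b} = \{C_{i,a+1} : 1 \le i \le b+1\} \cup \{C_{1,j} : 1 \le j \le a+1\}$ (reflections are not allowed). A free copy of $L_{a,b}$ is any shift of one of these four. A set of polyominoes is a valid arrangement if each is contained in $\mathbb{B}$ and they are pairwise disjoint. A free packing of $\mathcal{P}$ is a set of free copies of $\mathcal{P}$ forming a valid arrangement such that adding any further free copy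 of $\mathcal{P}$ yields an invalid arrangement. The clumsy free packing number $\mathrm{cp}_{\mathrm{free}}(\mathcal{P})$ is the minimum number of polyominoes in a free packing of $\mathcal{P}$ on the $n \times n$ board. *)

(* Defs.v *)
From HB Require Import structures.
From mathcomp Require Import all_boot all_order all_algebra.
From mathcomp Require Import finmap.
Set Implicit Arguments. Unset Strict Implicit. Unset Printing Implicit Defensive.
Import Order.TTheory GRing.Theory Num.Theory.
Local Open Scope fset_scope.
Local Open Scope ring_scope.

(* A cell C_{i,j} is the pair (i, j) : column i, row j. *)
Definition cell := (int * int)%type.
Definition polyomino := {fset cell}.

Definition shift (P : polyomino) (c d : int) : polyomino :=
  [fset (x.1 + c, x.2 + d) | x in P].

Definition hseg (lo hi : nat) (r : int) : polyomino :=
  [fset ((i%:Z), r) | i in iota lo (hi.+1 - lo)%N].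
Definition vseg (k : int) (lo hi : nat) : polyomino :=
  [fset (k, (j%:Z)) | j in iota lo (hi.+1 - lo)%N].

(* L_{a,b} and its clockwise rotations, exactly as in the paper. *)
Definition Lab (a b : nat) : polyomino :=
  hseg 1 a.+1 1 `|` vseg 1 2 b.+1.
Definition LR1 (a b : nat) : polyomino :=
  hseg 1 b.+1 1 `|` vseg (b.+1)%:Z 1 a.+1.
Definition LR2 (a b : nat) : polyomino :=
  hseg 1 a.+1 (b.+1)%:Z `|` vseg (a.+1)%:Z 1 b.+1.
Definition LR3 (a b : nat) : polyomino :=
  hseg 1 b.+1 (a.+1)%:Z `|` vseg 1 1 a.+1.

Definition free_copy (a b : nat) (Q : polyomino) : Prop :=
  exists c d : int,
    Q = shift (Lab a b) c d \/ Q = shift (LR1 a b) c d \/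
    Q = shift (LR2 a b) c d \/ Q = shift (LR3 a b) c d.

Definition in_board (n : nat) (x : cell) : Prop :=
  1 <= x.1 <= n%:Z /\ 1 <= x.2 <= n%:Z.

Definition valid_arrangement (n : nat) (S : {fset polyomino}) : Prop :=
  (forall Q, Q \in S -> forall x, x \in Q -> in_board n x) /\
  (forall Q1 Q2, Q1 \in S -> Q2 \in S -> Q1 != Q2 -> [disjoint Q1 & Q2]).

Definition free_packing (a b : nat) (S : {fset polyomino}) : Prop :=
  let n := #|` Lab a b| in
  (forall Q, Q \in S -> free_copy a b Q) /\
  valid_arrangement n S /\
  (forall Q, free_copy a b Q -> Q \notin S -> ~ valid_arrangement n (Q |` S)).

Definition is_cp_free (a b : nat) (k : nat) : Prop :=
  (exists S, free_packing a b S /\ #|` S| = k) /\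
  (forall S, free_packing a b S -> (k <= #|` S|)%N).

(* Main.v *)
Require Import Defs.
From mathcomp Require Import all_boot all_order all_algebra finmap zify.
From Stdlib Require Import Classical.
Set Implicit Arguments. Unset Strict Implicit. Unset Printing Implicit Defensive.
Import Order.TTheory GRing.Theory Num.Theory.
Local Open Scope fset_scope.
Local Open Scope ring_scope.

Lemma memS (P : polyomino) c d (x : cell) :
  (x \in shift P c d) = ((x.1 - c, x.2 - d) \in P).
Proof.
apply/imfsetP/idP => [[y yP ->]|xP] /=.
  by rewrite !addrK -surjective_pairing.
exists (x.1 - c, x.2 - d) => //=; rewrite !subrK; by case: x {xP}.
Qed.

Lemma memH lo hi r (x : cell) :
  (x \in hseg lo hi r) = [&& x.2 == r, lo%:Z <= x.1 & x.1 <= hi%:Z].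
Proof.
apply/imfsetP/idP => [[i /= iP ->]|] /=.
  rewrite mem_iota in iP. rewrite eqxx /=. lia.
case: x => x1 x2 /= /and3P [/eqP -> h1 h2].
exists `|x1|%N; rewrite /= ?mem_iota; first lia.
congr (_, _); lia.
Qed.

Lemma memV k lo hi (x : cell) :
  (x \in vseg k lo hi) = [&& x.1 == k, lo%:Z <= x.2 & x.2 <= hi%:Z].
Proof.
apply/imfsetP/idP => [[i /= iP ->]|] /=.
  rewrite mem_iota in iP. rewrite eqxx /=. lia.
case: x => x1 x2 /= /and3P [/eqP -> h1 h2].
exists `|x2|%N; rewrite /= ?mem_iota; first lia.
congr (_, _); lia.
Qed.
Lemma cardH lo hi r : #|` hseg lo hi r| = (hi.+1 - lo)%N.
Proof.
rewrite card_imfset /=; first by rewrite undup_id ?iota_uniq // size_iota.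
by move=> i j h; have := congr1 fst h; have := congr1 snd h => /= *; lia.
Qed.
Lemma cardV k lo hi : #|` vseg k lo hi| = (hi.+1 - lo)%N.
Proof.
rewrite card_imfset /=; first by rewrite undup_id ?iota_uniq // size_iota.
by move=> i j h; have := congr1 fst h; have := congr1 snd h => /= *; lia.
Qed.
Lemma cardL b : #|` Lab 1 b| = b.+2.
Proof.
have [_ e] := leq_card_fsetU (hseg 1 2 1) (vseg 1 2 b.+1).
have dj : [disjoint hseg 1 2 1 & vseg 1 2 b.+1]%fset.
  apply/fdisjointP => x; rewrite memH memV; lia.
rewrite dj cardH cardV in e; rewrite /Lab (eqP e); lia.
Qed.

Ltac memsimp := rewrite /Lab /LR1 /LR2 /LR3 ?memS ?in_fsetU ?memH ?memV /=.



Lemma cellsL b c d (R : cell -> Prop) :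
  (forall x, x \in shift (Lab 1 b) c d -> R x) ->
  [/\ R (1+c,1+d), R (2+c,1+d) & R (1+c, b.+1%:Z+d)].
Proof. by move=> H; split; apply: H; memsimp; lia. Qed.
Lemma cellsR1 b c d (R : cell -> Prop) :
  (forall x, x \in shift (LR1 1 b) c d -> R x) ->
  [/\ R (1+c,1+d), R (b.+1%:Z+c,1+d) & R (b.+1%:Z+c, 2+d)].
Proof. by move=> H; split; apply: H; memsimp; lia. Qed.
Lemma cellsR2 b c d (R : cell -> Prop) :
  (forall x, x \in shift (LR2 1 b) c d -> R x) ->
  [/\ R (1+c,b.+1%:Z+d), R (2+c,b.+1%:Z+d) & R (2+c, 1+d)].
Proof. by move=> H; split; apply: H; memsimp; lia. Qed.
Lemma cellsR3 b c d (R : cell -> Prop) :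
  (forall x, x \in shift (LR3 1 b) c d -> R x) ->
  [/\ R (1+c,2+d), R (b.+1%:Z+c,2+d) & R (1+c, 1+d)].
Proof. by move=> H; split; apply: H; memsimp; lia. Qed.

Definition pin b : {fset polyomino} :=
  [fset shift (LR1 1 b) 0 0; shift (LR2 1 b) b%:Z 0; shift (LR3 1 b) 1 b%:Z;
        shift (Lab 1 b) 0 1].

Lemma coverPin b : (2 <= b)%N -> forall Q, free_copy 1 b Q ->
  (forall x, x \in Q -> in_board b.+2 x) ->
  exists2 P, P \in pin b & ~~ [disjoint Q & P]%fset.
Proof.
move=> hb Q [c [d hQ]] hB.
case dA: [disjoint Q & shift (LR1 1 b) 0 0]%fset;
  last by exists (shift (LR1 1 b) 0 0); [rewrite /pin !inE eqxx ?orbT|rewrite dA].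
case dB: [disjoint Q & shift (LR2 1 b) b%:Z 0]%fset;
  last by exists (shift (LR2 1 b) b%:Z 0); [rewrite /pin !inE eqxx ?orbT|rewrite dB].
case dC: [disjoint Q & shift (LR3 1 b) 1 b%:Z]%fset;
  last by exists (shift (LR3 1 b) 1 b%:Z); [rewrite /pin !inE eqxx ?orbT|rewrite dC].
case dD: [disjoint Q & shift (Lab 1 b) 0 1]%fset;
  last by exists (shift (Lab 1 b) 0 1); [rewrite /pin !inE eqxx ?orbT|rewrite dD].
have key : forall x, x \in Q -> in_board b.+2 x /\ x \notin shift (LR1 1 b) 0 0
  /\ x \notin shift (LR2 1 b) b%:Z 0 /\ x \notin shift (LR3 1 b) 1 b%:Z
  /\ x \notin shift (Lab 1 b) 0 1.
  move=> x xQ; split; first exact: hB.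
  by do !split; [exact: (fdisjointP dA)|exact: (fdisjointP dB)|
    exact: (fdisjointP dC)|exact: (fdisjointP dD)].
case: hQ => [E|[E|[E|E]]]; rewrite E in key;
  [case: (cellsL key)|case: (cellsR1 key)|case: (cellsR2 key)|case: (cellsR3 key)];
  rewrite /in_board; memsimp; lia.
Qed.

Definition pin1 : {fset polyomino} :=
  [fset shift (Lab 1 1) 0 0; shift (LR2 1 1) 1 1].

Lemma coverPin1 : forall Q, free_copy 1 1 Q ->
  (forall x, x \in Q -> in_board 3 x) ->
  exists2 P, P \in pin1 & ~~ [disjoint Q & P]%fset.
Proof.
move=> Q [c [d hQ]] hB.
case dA: [disjoint Q & shift (Lab 1 1) 0 0]%fset;
  last by exists (shift (Lab 1 1) 0 0); [rewrite /pin1 !inE eqxx ?orbT|rewrite dA].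
case dB: [disjoint Q & shift (LR2 1 1) 1 1]%fset;
  last by exists (shift (LR2 1 1) 1 1); [rewrite /pin1 !inE eqxx ?orbT|rewrite dB].
have key : forall x, x \in Q -> in_board 3 x /\ x \notin shift (Lab 1 1) 0 0
  /\ x \notin shift (LR2 1 1) 1 1.
  move=> x xQ; split; first exact: hB.
  by do !split; [exact: (fdisjointP dA)|exact: (fdisjointP dB)].
case: hQ => [E|[E|[E|E]]]; rewrite E in key;
  [case: (cellsL key)|case: (cellsR1 key)|case: (cellsR2 key)|case: (cellsR3 key)];
  rewrite /in_board; memsimp; lia.
Qed.

Lemma ndisj (A B : polyomino) : ~~ [disjoint A & B]%fset -> exists2 x, x \in A & x \in B.
Proof.
rewrite -fsetI_eq0 => /fset0Pn [x]; rewrite in_fsetI => /andP [] *; by exists x.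
Qed.

Definition cand b : {fset polyomino} :=
  [fset shift (Lab 1 b) 0 0; shift (LR1 1 b) 1 0; shift (LR2 1 b) 1 1;
        shift (LR3 1 b) 0 1].

Lemma lowP b : (1 <= b)%N -> forall P, free_copy 1 b P ->
  (forall x, x \in P -> in_board b.+2 x) ->
  exists2 Q, Q \in cand b & [disjoint P & Q]%fset.
Proof.
move=> hb P [c [d hP]] hB.
case dA: [disjoint P & shift (Lab 1 b) 0 0]%fset;
  first by exists (shift (Lab 1 b) 0 0); [rewrite /cand !inE eqxx ?orbT|rewrite dA].
case dB: [disjoint P & shift (LR1 1 b) 1 0]%fset;
  first by exists (shift (LR1 1 b) 1 0); [rewrite /cand !inE eqxx ?orbT|rewrite dB].
case dC: [disjoint P & shift (LR2 1 b) 1 1]%fset;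
  first by exists (shift (LR2 1 b) 1 1); [rewrite /cand !inE eqxx ?orbT|rewrite dC].
case dD: [disjoint P & shift (LR3 1 b) 0 1]%fset;
  first by exists (shift (LR3 1 b) 0 1); [rewrite /cand !inE eqxx ?orbT|rewrite dD].
have [[x1 y1] h1 k1] := ndisj (negbT dA).
have [[x2 y2] h2 k2] := ndisj (negbT dB).
have [[x3 y3] h3 k3] := ndisj (negbT dC).
have [[x4 y4] h4 k4] := ndisj (negbT dD).
move: k1 k2 k3 k4; memsimp => k1 k2 k3 k4.
case: hP => [E|[E|[E|E]]]; rewrite E in hB h1 h2 h3 h4;
  [case: (cellsL hB)|case: (cellsR1 hB)|case: (cellsR2 hB)|case: (cellsR3 hB)];
  move: h1 h2 h3 h4; rewrite /in_board; memsimp; lia.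
Qed.

Lemma in4 (T : choiceType) (a b c d x : T) :
  x \in [fset a; b; c; d] -> [\/ x = a, x = b, x = c | x = d].
Proof.
rewrite !inE => /orP[/orP[/orP[]|]|] /eqP ->;
  by [apply: Or41|apply: Or42|apply: Or43|apply: Or44].
Qed.

Lemma maxi b S :
  (forall Q, free_copy 1 b Q -> (forall x, x \in Q -> in_board b.+2 x) ->
     exists2 P, P \in S & ~~ [disjoint Q & P]%fset) ->
  forall Q, free_copy 1 b Q -> Q \notin S ->
    ~ valid_arrangement #|` Lab 1 b| (Q |` S).
Proof.
move=> cover Q fQ QS [hb hd]; rewrite cardL in hb.
have [P PS nd] := cover Q fQ (hb Q (fset1U1 Q S)).
apply: (negP nd); apply: hd; [exact: fset1U1 | exact: fset1Ur | ].
by apply: contraNneq QS => ->.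
Qed.

Lemma valid_add n (S : {fset polyomino}) (Q : polyomino) : valid_arrangement n S ->
  (forall x, x \in Q -> in_board n x) ->
  (forall P, P \in S -> [disjoint Q & P]%fset) ->
  valid_arrangement n (Q |` S).
Proof.
move=> [hb hd] hQ hdis; split.
  by move=> R /fset1UP [->|]; [exact: hQ | exact: hb].
move=> R1 R2 /fset1UP [->|h1] /fset1UP [->|h2];
  [by rewrite eqxx | move=> _; exact: hdis |
   move=> _; rewrite fdisjoint_sym; exact: hdis | exact: hd].
Qed.

Lemma pin_pack b : (2 <= b)%N -> free_packing 1 b (pin b).
Proof.
move=> hb; split; [|split; [split|]].
- move=> Q /in4 [] ->.
  + by exists 0, 0; right; left.
  + by exists b%:Z, 0; right; right; left.
  + by exists 1, b%:Z; right; right; right.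
  + by exists 0, 1; left.
- rewrite cardL => Q /in4 [] -> x; rewrite /in_board; memsimp; lia.
- move=> Q1 Q2 /in4 [] -> /in4 [] -> //; rewrite ?eqxx // => _;
    apply/fdisjointP => x; memsimp; lia.
- exact: maxi (coverPin hb).
Qed.

Lemma pin1_pack : free_packing 1 1 pin1.
Proof.
split; [|split; [split|]].
- move=> Q /fset2P [] ->.
  + by exists 0, 0; left.
  + by exists 1, 1; right; right; left.
- rewrite cardL => Q /fset2P [] -> x; rewrite /in_board; memsimp; lia.
- move=> Q1 Q2 /fset2P [] -> /fset2P [] -> //; rewrite ?eqxx // => _;
    apply/fdisjointP => x; memsimp; lia.
- exact: maxi coverPin1.
Qed.

Lemma low2 b (S : {fset polyomino}) : (1 <= b)%N -> free_packing 1 b S -> (2 <= #|`S|)%N.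
Proof.
move=> hb [fc [va mx]].
have [hbd _] := va; rewrite cardL in hbd.
case: (ltnP 1 #|`S|) => // hS; exfalso.
have [Q [fQ QS QB QD]] : exists Q, [/\ free_copy 1 b Q, Q \notin S,
    (forall x, x \in Q -> in_board #|`Lab 1 b| x) &
    forall P, P \in S -> [disjoint Q & P]%fset].
  case E: #|`S| hS => [|[|//]] _.
  - rewrite (cardfs0_eq E); exists (shift (Lab 1 b) 0 0); split => //.
    + by exists 0, 0; left.
    + rewrite cardL => x; rewrite /in_board; memsimp; lia.
  - have /cardfs1P [P SP] : #|`S| == 1%N by rewrite E.
    have PS : P \in S by rewrite SP fset11.
    have [Q Qc dQ] := lowP hb (fc P PS) (hbd P PS).
    exists Q; split.
    + move: Qc => /in4 [] ->.
      * by exists 0, 0; left.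
      * by exists 1, 0; right; left.
      * by exists 1, 1; right; right; left.
      * by exists 0, 1; right; right; right.
    + rewrite SP inE; apply/negP => /eqP QP; rewrite QP in dQ.
      have nP : forall x, x \in P -> False.
        by move=> x xP; move: (fdisjointP dQ x xP); rewrite xP.
      case: (fc P PS) => c [d [E'|[E'|[E'|E']]]]; rewrite E' in nP;
        [by case: (cellsL nP)|by case: (cellsR1 nP)|by case: (cellsR2 nP)|by case: (cellsR3 nP)].
    + rewrite cardL; move: Qc => /in4 [] -> x; rewrite /in_board; memsimp; lia.
    + by move=> P'; rewrite SP inE => /eqP ->; rewrite fdisjoint_sym.
exact: (mx Q fQ QS (valid_add va QB QD)).
Qed.

Lemma min_ex (Q : nat -> Prop) n : Q n -> exists k, Q k /\ forall m, Q m -> (k <= m)%N.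
Proof.
elim: n {-2}n (leqnn n) => [|n IH] m hm Qm.
  by exists m; split => // m' _; rewrite leqn0 in hm; rewrite (eqP hm).
case: (classic (exists m', Q m' /\ (m' < m)%N)) => [[m' [Qm' lt]]|no].
  by apply: (IH m') => //; lia.
exists m; split => // m' Qm'; rewrite leqNgt; apply/negP => lt; apply: no; eauto.
Qed.

Theorem corollary1 (b : nat) (hb : (1 <= b)%N) :
  #|` Lab 1 b| = b.+2 /\
  exists k : nat, is_cp_free 1 b k /\ (2 <= k <= 4)%N.
Proof.
split; first exact: cardL.
have [S0 [pS0 cS0]] : exists S, free_packing 1 b S /\ (#|`S| <= 4)%N.
  case: (ltnP 1 b) => hb2.
  - exists (pin b); split; first exact: pin_pack.
    by rewrite /pin !cardfsU !cardfs1; lia.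
  - have eb : b = 1%N by lia.
    rewrite eb; exists pin1; split; first exact: pin1_pack.
    by rewrite /pin1 !cardfsU !cardfs1; lia.
have ex0 : exists S, free_packing 1 b S /\ #|`S| = #|`S0| by exists S0.
have [k [[S [pS cS]] kmin]] := min_ex (Q := fun n => exists S, free_packing 1 b S /\ #|`S| = n) ex0.
exists k; split.
  split; first by exists S.
  by move=> S' pS'; apply: kmin; exists S'.
apply/andP; split; first by rewrite -cS; exact: low2 hb pS.
exact: leq_trans (kmin _ ex0) cS0.
Qed.
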